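(* Let $m_1,m_2\ge1$, let $k_1,k_2\ge0$ be integers and $r_1,r_2>0$ with $r_1^2+r_2^2=1$. Let $F_1:\mathbb{R}^{m_1+1}\to\mathbb{R}^{n_1+1}$ and $F_2:\mathbb{R}^{m_2+1}\to\mathbb{R}^{n_2+1}$ be harmonic forms of degrees $k_1$, $k_2$ (each component a harmonic homogeneous polynomial of that degree) with $|F_1(\bar x)|^2=r_1^2|\bar x|^{2k_1}$ on $\mathbb{R}^{m_1+1}$ and $|F_2(\bar y)|^2=r_2^2|\bar y|^{2k_2}$ on $\mathbb{R}^{m_2+1}$, restricting to $\varphi_1:\mathbb{S}^{m_1}\to\mathbb{S}^{n_1}(r_1)$ and $\varphi_2:\mathbb{S}^{m_2}\to\mathbb{S}^{n_2}(r_2)$. Let $\varphi=\iota\circ(\varphi_1,\varphi_2):\mathbb{S}^{m_1}\times\mathbb{S}^{m_2}\to\mathbb{S}^{n_1+n_2+1}$, $\varphi(x,y)=(\varphi_1(x),\varphi_2(y))$, where $\mathbb{S}^{m_1}\times\mathbb{S}^{m_2}$ carries the product metric and $\iota$ is the canonical inclusion of $\mathbb{S}^{n_1}(r_1)\times\mathbb{S}^{n_2}(r_2)$ into $\mathbb{S}^{n_1+n_2+1}$. Then $\varphi$ is proper biharmonic if and only if $r_1=r_2=1/\sqrt2$ and $e(\varphi_1)\neq e(\varphi_2)$.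
   Context: $\mathbb{S}^m$ is the unit sphere in $\mathbb{R}^{m+1}$, $\mathbb{S}^n(r)$ the sphere of radius $r$ centred at $0$. Energy density $e(\psi)=\frac12|d\psi|^2$ (here constant). Proper biharmonic means vanishing bitension field $\tau_2(\varphi)=-\Delta\tau(\varphi)-\operatorname{trace}R^N(d\varphi\cdot,\tau(\varphi))d\varphi\cdot$ (with $\Delta=-\operatorname{trace}\nabla^2$) but nonvanishing tension field $\tau(\varphi)=\operatorname{trace}\nabla d\varphi$. *)

(* Defs.v *)
From Stdlib Require Import Reals Lra List.
From Coquelicot Require Import Coquelicot.
Open Scope R_scope.

(** Points/vectors of R^d are represented as [nat -> R]; only the coordinates
    [0 .. d-1] are ever used. *)
Definition vec := nat -> R.

Fixpoint sumR (n : nat) (f : nat -> R) : R :=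
  match n with O => 0 | S n' => sumR n' f + f n' end.
Fixpoint prodR (n : nat) (f : nat -> R) : R :=
  match n with O => 1 | S n' => prodR n' f * f n' end.
Fixpoint sumN (n : nat) (f : nat -> nat) : nat :=
  match n with O => O | S n' => (sumN n' f + f n')%nat end.

Definition vzero : vec := fun _ => 0.
Definition dot (d : nat) (u v : vec) : R := sumR d (fun i => u i * v i).
Definition sqnorm (d : nat) (u : vec) : R := dot d u u.
Definition basis (j : nat) : vec := fun i => if Nat.eqb i j then 1 else 0.
Definition on_sphere (d : nat) (x : vec) : Prop := sqnorm d x = 1.

Definition proj (d : nat) (x w : vec) : vec := fun i => w i - dot d x w * x i.

(** Geodesic of the unit sphere in R^d through x with initial velocity u
    (u tangent at x). *)
Definition geo (d : nat) (x u : vec) (t : R) : vec :=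
  fun i => cos (sqrt (sqnorm d u) * t) * x i
           + sin (sqrt (sqnorm d u) * t) / sqrt (sqnorm d u) * u i.

Definition monomial (d : nat) (a : nat -> nat) (x : vec) : R :=
  prodR d (fun i => x i ^ a i).

Definition is_hom_poly (d k : nat) (f : vec -> R) : Prop :=
  exists cs : list (R * (nat -> nat)),
    (forall ca, In ca cs -> sumN d (snd ca) = k) /\
    forall x, f x = fold_right (fun ca acc => fst ca * monomial d (snd ca) x + acc) 0 cs.

Definition is_harmonic (d : nat) (f : vec -> R) : Prop :=
  forall x : vec,
    sumR d (fun i => Derive_n (fun t => f (fun l => if Nat.eqb l i then x l + t else x l)) 2 0) = 0.

Definition harmonic_form (d n k : nat) (F : vec -> vec) : Prop :=
  forall j, (j < n)%nat -> is_hom_poly d k (fun x => F x j) /\ is_harmonic d (fun x => F x j).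

Definition energy_density (d n : nat) (F : vec -> vec) (x : vec) : R :=
  / 2 * sumR d (fun i =>
     sqnorm n (fun j => Derive (fun t => F (geo d x (proj d x (basis i)) t) j) 0)).

(** Trace over T_{(x,y)}(S x S) of a vector-valued quadratic form Q(u,v):
    sum over the orthogonal projections of the ambient standard basis. *)
Definition trM (d1 d2 : nat) (x y : vec) (Q : vec -> vec -> vec) : vec :=
  fun j => sumR d1 (fun i => Q (proj d1 x (basis i)) vzero j)
         + sumR d2 (fun i => Q vzero (proj d2 y (basis i)) j).

Definition dmap (d1 d2 : nat) (Phi : vec -> vec -> vec) (x y u v : vec) : vec :=
  fun j => Derive (fun t => Phi (geo d1 x u t) (geo d2 y v t) j) 0.

(** tension field tau(Phi) = trace nabla dPhi; along a geodesic gamma,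
    (nabla dPhi)(gamma',gamma') = P (d^2/dt^2 Phi(gamma)). *)
Definition tension (dT d1 d2 : nat) (Phi : vec -> vec -> vec) (x y : vec) : vec :=
  proj dT (Phi x y)
    (trM d1 d2 x y (fun u v j => Derive_n (fun t => Phi (geo d1 x u t) (geo d2 y v t) j) 2 0)).

(** second covariant derivative (nabla^2 V)((u,v),(u,v)) of a section V along Phi,
    computed along the geodesic with initial velocity (u,v). *)
Definition hess_sec (dT d1 d2 : nat) (Phi V : vec -> vec -> vec) (x y u v : vec) : vec :=
  let W := fun t => proj dT (Phi (geo d1 x u t) (geo d2 y v t))
                      (fun j => Derive (fun s => V (geo d1 x u s) (geo d2 y v s) j) t) in
  proj dT (Phi x y) (fun j => Derive (fun t => W t j) 0).

(** rough Laplacian, Delta = - trace nabla^2 *)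
Definition rough_lap (dT d1 d2 : nat) (Phi V : vec -> vec -> vec) (x y : vec) : vec :=
  fun j => - trM d1 d2 x y (hess_sec dT d1 d2 Phi V x y) j.

(** trace R^N(dPhi ., tau) dPhi . for the unit sphere, with
    R(X,Y)Z = <Y,Z>X - <X,Z>Y *)
Definition curv_trace (dT d1 d2 : nat) (Phi : vec -> vec -> vec) (x y : vec) : vec :=
  let tau := tension dT d1 d2 Phi x y in
  trM d1 d2 x y (fun u v j =>
    let w := dmap d1 d2 Phi x y u v in dot dT tau w * w j - sqnorm dT w * tau j).

Definition bitension (dT d1 d2 : nat) (Phi : vec -> vec -> vec) (x y : vec) : vec :=
  fun j => - rough_lap dT d1 d2 Phi (tension dT d1 d2 Phi) x y j
           - curv_trace dT d1 d2 Phi x y j.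

Definition proper_biharmonic (dT d1 d2 : nat) (Phi : vec -> vec -> vec) : Prop :=
  (forall x y, on_sphere d1 x -> on_sphere d2 y ->
     forall j, (j < dT)%nat -> bitension dT d1 d2 Phi x y j = 0) /\
  (exists x y, on_sphere d1 x /\ on_sphere d2 y /\
     exists j, (j < dT)%nat /\ tension dT d1 d2 Phi x y j <> 0).

(** iota o (phi1, phi2) : (x,y) |-> (F1 x, F2 y) in R^{n1+1} x R^{n2+1} *)
Definition prod_map (n1 : nat) (F1 F2 : vec -> vec) (x y : vec) : vec :=
  fun j => if Nat.ltb j (S n1) then F1 x j else F2 y (j - S n1)%nat.

(* Main.v *)
Require Import Defs.
From Stdlib Require Import Reals Lra Lia List FunctionalExtensionality Classical_Prop.
From Coquelicot Require Import Coquelicot.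
Open Scope R_scope.

Lemma isd_plus (f g : R -> R) x df dg : is_derive f x df -> is_derive g x dg ->
  is_derive (fun t => f t + g t) x (df + dg).
Proof. intros H1 H2. exact (is_derive_plus f g x df dg H1 H2). Qed.
Lemma isd_minus (f g : R -> R) x df dg : is_derive f x df -> is_derive g x dg ->
  is_derive (fun t => f t - g t) x (df - dg).
Proof. intros H1 H2. exact (is_derive_minus f g x df dg H1 H2). Qed.
Lemma isd_mult (f g : R -> R) x df dg : is_derive f x df -> is_derive g x dg ->
  is_derive (fun t => f t * g t) x (df * g x + f x * dg).
Proof. intros H1 H2. exact (is_derive_mult f g x df dg H1 H2 Rmult_comm). Qed.
Lemma isd_const (a x : R) : is_derive (fun _ => a) x 0.
Proof. exact (is_derive_const a x). Qed.
Lemma isd_ext (f g : R -> R) x l : (forall t, f t = g t) -> is_derive f x l -> is_derive g x l.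
Proof. apply is_derive_ext. Qed.
Lemma isd_ext2 (f : R -> R) (x l l' : R) : l = l' -> is_derive f x l -> is_derive f x l'.
Proof. intros ->; auto. Qed.

Lemma sumR_ext n f g : (forall i, (i < n)%nat -> f i = g i) -> sumR n f = sumR n g.
Proof. induction n; simpl; intros H; auto. rewrite IHn by (intros; apply H; lia). rewrite H by lia. auto. Qed.
Lemma sumR_plus n f g : sumR n (fun i => f i + g i) = sumR n f + sumR n g.
Proof. induction n; simpl; [lra|]. rewrite IHn; lra. Qed.
Lemma sumR_minus n f g : sumR n (fun i => f i - g i) = sumR n f - sumR n g.
Proof. induction n; simpl; [lra|]. rewrite IHn; lra. Qed.
Lemma sumR_scal n c f : sumR n (fun i => c * f i) = c * sumR n f.
Proof. induction n; simpl; [lra|]. rewrite IHn; lra. Qed.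
Lemma sumR_scalr n c f : sumR n (fun i => f i * c) = sumR n f * c.
Proof. induction n; simpl; [lra|]. rewrite IHn; lra. Qed.
Lemma sumR_zero n : sumR n (fun _ => 0) = 0.
Proof. induction n; simpl; [lra|]. rewrite IHn; lra. Qed.
Lemma sumR_const n c : sumR n (fun _ => c) = INR n * c.
Proof. induction n; simpl sumR; [simpl; lra|]. rewrite IHn, S_INR; lra. Qed.
Lemma sumR_swap n m (f : nat -> nat -> R) :
  sumR n (fun i => sumR m (fun j => f i j)) = sumR m (fun j => sumR n (fun i => f i j)).
Proof. induction n; simpl. rewrite sumR_zero; auto. rewrite IHn, <- sumR_plus. auto. Qed.
Lemma sumR_split a b f : sumR (a + b) f = sumR a f + sumR b (fun j => f (a + j)%nat).
Proof. induction b; simpl. rewrite Nat.add_0_r; lra. rewrite Nat.add_succ_r; simpl. rewrite IHb; lra. Qed.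
Lemma sumR_basis n i g : (i < n)%nat -> sumR n (fun l => basis i l * g l) = g i.
Proof.
  induction n; intros H; [lia|]. simpl. unfold basis at 2.
  destruct (Nat.eq_dec i n) as [->|Hn].
  - rewrite Nat.eqb_refl. rewrite (sumR_ext _ _ (fun _ => 0)). rewrite sumR_zero; lra.
    intros l Hl. unfold basis. destruct (Nat.eqb_spec l n); [lia|lra].
  - destruct (Nat.eqb_spec n i); [lia|]. rewrite IHn by lia. lra.
Qed.
Lemma sumR_basis' n i g : (i < n)%nat -> sumR n (fun l => g l * basis i l) = g i.
Proof. intros H. rewrite <- (sumR_basis n i g H). apply sumR_ext; intros; lra. Qed.
Lemma sumR_nonneg n f : (forall i, (i < n)%nat -> 0 <= f i) -> 0 <= sumR n f.
Proof. induction n; simpl; intros H; [lra|]. specialize (H n) as H'. assert (0 <= sumR n f) by (apply IHn; intros; apply H; lia). assert (0<= f n) by (apply H; lia). lra. Qed.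
Lemma sumR_nonneg_zero n f : (forall i, (i < n)%nat -> 0 <= f i) -> sumR n f = 0 ->
  forall i, (i < n)%nat -> f i = 0.
Proof.
  induction n; simpl; intros H Hs i Hi; [lia|].
  assert (0 <= sumR n f) by (apply sumR_nonneg; intros; apply H; lia).
  assert (0 <= f n) by (apply H; lia).
  destruct (Nat.eq_dec i n) as [->|]. lra. apply IHn. intros; apply H; lia. lra. lia.
Qed.
Lemma isd_sumR n (f f' : nat -> R -> R) x :
  (forall j, (j < n)%nat -> is_derive (f j) x (f' j x)) ->
  is_derive (fun t => sumR n (fun j => f j t)) x (sumR n (fun j => f' j x)).
Proof.
  induction n; intros H; simpl. apply isd_const.
  apply isd_plus. apply IHn; intros; apply H; lia. apply H; lia.
Qed.

Inductive pexpr := PC (r : R) | PV (l : nat) | PA (p q : pexpr) | PM (p q : pexpr).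
Fixpoint ev (y : vec) (p : pexpr) : R :=
  match p with PC r => r | PV l => y l | PA p q => ev y p + ev y q | PM p q => ev y p * ev y q end.
Fixpoint dP (l : nat) (p : pexpr) : pexpr :=
  match p with
  | PC _ => PC 0
  | PV l' => PC (if Nat.eqb l l' then 1 else 0)
  | PA p q => PA (dP l p) (dP l q)
  | PM p q => PA (PM (dP l p) q) (PM p (dP l q)) end.
Fixpoint wf (d : nat) (p : pexpr) : Prop :=
  match p with PC _ => True | PV l => (l < d)%nat | PA p q => wf d p /\ wf d q | PM p q => wf d p /\ wf d q end.
Lemma wf_dP d l p : wf d p -> wf d (dP l p).
Proof. induction p; simpl; intuition. Qed.
Lemma ev_ext y z p : (forall l, y l = z l) -> ev y p = ev z p.
Proof. intros H; induction p; simpl; try rewrite IHp1, IHp2; auto. Qed.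

Definition Df d p (x v : vec) := sumR d (fun l => v l * ev x (dP l p)).
Definition D2 d p (x v w : vec) :=
  sumR d (fun l => v l * sumR d (fun l' => w l' * ev x (dP l' (dP l p)))).

Lemma chain d p (c c' : R -> vec) t :
  wf d p -> (forall l, (l < d)%nat -> is_derive (fun s => c s l) t (c' t l)) ->
  is_derive (fun s => ev (c s) p) t (Df d p (c t) (c' t)).
Proof.
  unfold Df. intros Hw Hc. induction p; simpl in *.
  - eapply isd_ext2; [|apply isd_const]. rewrite (sumR_ext _ _ (fun _ => 0)); [rewrite sumR_zero; auto|]. intros; lra.
  - eapply isd_ext2; [|apply Hc; auto].
    rewrite <- (sumR_basis' d l (c' t)) by auto. apply sumR_ext; intros i Hi.
    unfold basis. destruct (Nat.eqb_spec i l), (Nat.eqb_spec l i); subst; try lia; lra.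
  - destruct Hw. eapply isd_ext2; [|apply isd_plus; auto]. rewrite <- sumR_plus. apply sumR_ext; intros; lra.
  - destruct Hw. eapply isd_ext2; [|apply isd_mult; auto].
    rewrite <- sumR_scal, <- sumR_scalr, <- sumR_plus. apply sumR_ext; intros; lra.
Qed.

Lemma chain2 d p (c c' c'' : R -> vec) t :
  wf d p -> (forall s l, (l < d)%nat -> is_derive (fun s => c s l) s (c' s l)) ->
  (forall l, (l < d)%nat -> is_derive (fun s => c' s l) t (c'' t l)) ->
  is_derive (fun s => Df d p (c s) (c' s)) t (Df d p (c t) (c'' t) + D2 d p (c t) (c' t) (c' t)).
Proof.
  intros Hw Hc Hc'. unfold Df, D2.
  eapply isd_ext2; [|apply (isd_sumR d (fun l s => c' s l * ev (c s) (dP l p))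
     (fun l s => c'' s l * ev (c s) (dP l p) + c' s l * Df d (dP l p) (c s) (c' s)))].
  - rewrite <- sumR_plus. auto.
  - intros l Hl. apply isd_mult. apply Hc'; auto. apply chain. apply wf_dP; auto. intros; apply Hc; auto.
Qed.

Lemma Df_lin d p x (v w : vec) a : Df d p x (fun l => v l + a * w l) = Df d p x v + a * Df d p x w.
Proof. unfold Df. rewrite <- sumR_scal, <- sumR_plus. apply sumR_ext; intros; ring. Qed.
Lemma Df_scal d p x (v : vec) a : Df d p x (fun l => a * v l) = a * Df d p x v.
Proof. unfold Df. rewrite <- sumR_scal. apply sumR_ext; intros; ring. Qed.
Lemma Df_ext d p x (v w : vec) : (forall l, (l < d)%nat -> v l = w l) -> Df d p x v = Df d p x w.
Proof. intros H. unfold Df. apply sumR_ext; intros; rewrite H; auto. Qed.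
Lemma Df_zero d p x : Df d p x vzero = 0.
Proof. unfold Df, vzero. transitivity (sumR d (fun _ => 0)); [apply sumR_ext; intros; ring|apply sumR_zero]. Qed.
Lemma Df_basis d p x i : (i < d)%nat -> Df d p x (basis i) = ev x (dP i p).
Proof. intros. unfold Df. apply sumR_basis; auto. Qed.
Lemma D2_ext d p x v v' w w' : (forall l, (l < d)%nat -> v l = v' l) -> (forall l, (l < d)%nat -> w l = w' l) ->
  D2 d p x v w = D2 d p x v' w'.
Proof. intros H1 H2. unfold D2. apply sumR_ext; intros. rewrite H1 by auto. f_equal. apply sumR_ext; intros. rewrite H2; auto. Qed.

Fixpoint ppow q n := match n with O => PC 1 | S n => PM (ppow q n) q end.
Fixpoint pmon d (a : nat -> nat) := match d with O => PC 1 | S d' => PM (pmon d' a) (ppow (PV d') (a d')) end.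
Definition plist d (cs : list (R * (nat -> nat))) :=
  fold_right (fun ca acc => PA (PM (PC (fst ca)) (pmon d (snd ca))) acc) (PC 0) cs.

Lemma ev_ppow y q n : ev y (ppow q n) = ev y q ^ n.
Proof. induction n; simpl; auto. rewrite IHn; ring. Qed.
Lemma ev_pmon y d a : ev y (pmon d a) = monomial d a y.
Proof. unfold monomial. induction d; simpl; auto. rewrite IHd, ev_ppow. auto. Qed.
Lemma wf_ppow d q n : wf d q -> wf d (ppow q n).
Proof. induction n; simpl; auto. Qed.
Lemma wf_pmon d a : wf d (pmon d a).
Proof.
  assert (forall d', (d' <= d)%nat -> wf d (pmon d' a)). induction d'; simpl; auto.
  intros; split. apply IHd'; lia. apply wf_ppow. simpl; lia. apply H; lia.
Qed.
Lemma monomial_hom d a s y : monomial d a (fun l => s * y l) = s ^ (sumN d a) * monomial d a y.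
Proof. unfold monomial. induction d; simpl. ring. rewrite IHd, pow_add, Rpow_mult_distr. ring. Qed.

Lemma hom_poly_rep d k f : is_hom_poly d k f ->
  exists p, wf d p /\ (forall y, f y = ev y p) /\ (forall s y, ev (fun l => s * y l) p = s ^ k * ev y p).
Proof.
  intros [cs [Hdeg Hf]]. exists (plist d cs). split; [|split].
  - clear Hf Hdeg. induction cs; simpl; auto. split; auto. split; auto. apply wf_pmon.
  - intros y. rewrite Hf. clear Hf Hdeg. induction cs; simpl; auto. rewrite IHcs, ev_pmon. auto.
  - intros s y. clear Hf. induction cs; simpl. ring.
    rewrite IHcs by (intros; apply Hdeg; simpl; auto). rewrite !ev_pmon, monomial_hom.
    rewrite Hdeg by (simpl; auto). ring.
Qed.

Lemma derive2_facts (g g1 g2 : R -> R) :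
  (forall t, is_derive g t (g1 t)) -> (forall t, is_derive g1 t (g2 t)) ->
  (forall t, ex_derive g t) /\ (forall t, Derive g t = g1 t) /\
  (forall t, ex_derive (Derive g) t) /\ (forall t, Derive_n g 2 t = g2 t).
Proof.
  intros H1 H2.
  assert (E : forall t, Derive g t = g1 t) by (intros; apply is_derive_unique; auto).
  split; [intros t; eexists; apply H1|]. split; auto. split.
  - intros t. exists (g2 t). eapply isd_ext; [|apply H2]. intros; rewrite E; auto.
  - intros t. simpl. rewrite (Derive_ext _ g1) by auto. apply is_derive_unique; auto.
Qed.

Lemma INR_pred k : INR k * INR (pred k) = INR k * (INR k - 1).
Proof. destruct k. simpl; ring. simpl pred. rewrite S_INR. ring. Qed.

Section Euler.
Variables (d k : nat) (p : pexpr).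
Hypothesis Hw : wf d p.
Hypothesis Hh : forall s y, ev (fun l => s * y l) p = s ^ k * ev y p.

Lemma euler1 x : Df d p x x = INR k * ev x p.
Proof.
  assert (H := chain d p (fun s l => s * x l) (fun _ => x) 1 Hw).
  assert (H' : is_derive (fun s => ev (fun l => s * x l) p) 1 (Df d p (fun l => 1 * x l) x)).
  { apply H. intros. auto_derive; auto. ring. }
  replace (fun l => 1 * x l) with x in H' by (apply functional_extensionality; intros; ring).
  apply is_derive_unique in H'. rewrite <- H'. rewrite (Derive_ext _ (fun s => s ^ k * ev x p)) by auto.
  apply is_derive_unique. auto_derive; auto. rewrite pow1. ring.
Qed.

Lemma euler2 x : D2 d p x x x = INR k * (INR k - 1) * ev x p.
Proof.
  assert (E1 : forall s, Df d p (fun l => s * x l) x = INR k * s ^ pred k * ev x p).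
  { intros s. assert (H' : is_derive (fun s => ev (fun l => s * x l) p) s (Df d p (fun l => s * x l) x)).
    { apply (chain d p (fun s l => s * x l) (fun _ => x)); auto. intros. auto_derive; auto. ring. }
    apply is_derive_unique in H'. rewrite <- H'. rewrite (Derive_ext _ (fun s => s ^ k * ev x p)) by auto.
    apply is_derive_unique. auto_derive; auto. ring. }
  assert (H := chain2 d p (fun s l => s * x l) (fun _ => x) (fun _ _ => 0) 1 Hw).
  assert (H' : is_derive (fun s => Df d p (fun l => s * x l) x) 1
     (Df d p (fun l => 1 * x l) (fun _ => 0) + D2 d p (fun l => 1 * x l) x x)).
  { apply H. intros. auto_derive; auto. ring. intros; apply isd_const. }
  replace (fun l => 1 * x l) with x in H' by (apply functional_extensionality; intros; ring).
  rewrite (Df_ext d p x _ vzero), Df_zero, Rplus_0_l in H' by auto.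
  apply is_derive_unique in H'. rewrite <- H'. rewrite (Derive_ext _ (fun s => INR k * s ^ pred k * ev x p)) by auto.
  rewrite <- INR_pred. apply is_derive_unique. auto_derive; auto. rewrite pow1. ring.
Qed.
End Euler.

Definition line (x : vec) (i : nat) (t : R) : vec := fun l => if Nat.eqb l i then x l + t else x l.

Lemma line_facts d p x i : wf d p ->
  (forall t, is_derive (fun t => ev (line x i t) p) t (Df d p (line x i t) (basis i))) /\
  (forall t, is_derive (fun t => Df d p (line x i t) (basis i)) t (D2 d p (line x i t) (basis i) (basis i))).
Proof.
  intros Hw. split; intros t.
  - apply (chain d p (line x i) (fun _ => basis i)); auto. intros l Hl. unfold line, basis. destruct (Nat.eqb l i).
    auto_derive; auto. apply isd_const.
  - eapply isd_ext2; [|apply (chain2 d p (line x i) (fun _ => basis i) (fun _ _ => 0))]; auto.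
    rewrite (Df_ext d p _ _ vzero), Df_zero by auto. apply Rplus_0_l.
    intros s l Hl. unfold line, basis. destruct (Nat.eqb l i).
    auto_derive; auto. apply isd_const.
    intros; apply isd_const.
Qed.

Lemma line0 x i : line x i 0 = x.
Proof. apply functional_extensionality; intros l. unfold line. destruct (Nat.eqb l i); ring. Qed.

Lemma sqnorm_nonneg d u : 0 <= sqnorm d u.
Proof. unfold sqnorm, dot. apply sumR_nonneg. intros; nra. Qed.

Lemma sqnorm_zero d u : sqnorm d u = 0 -> forall l, (l < d)%nat -> u l = 0.
Proof. intros H l Hl. unfold sqnorm, dot in H.
  assert (u l * u l = 0) by (apply (sumR_nonneg_zero d (fun i => u i * u i)); auto; intros; nra). nra. Qed.

Definition gd1 d (x u : vec) (t : R) : vec := fun l =>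
  let a := sqrt (sqnorm d u) in - a * sin (a * t) * x l + cos (a * t) * u l.
Definition gd2 d (x u : vec) (t : R) : vec := fun l =>
  let a := sqrt (sqnorm d u) in - (a * a) * cos (a * t) * x l - a * sin (a * t) * u l.

Lemma geo_deriv d x u t l : (l < d)%nat -> is_derive (fun s => geo d x u s l) t (gd1 d x u t l).
Proof.
  intros Hl. unfold geo, gd1. set (a := sqrt (sqnorm d u)).
  destruct (Req_dec a 0) as [Ha|Ha].
  - assert (u l = 0). { apply (sqnorm_zero d); auto. unfold a in Ha.
      apply sqrt_eq_0 in Ha; auto. apply sqnorm_nonneg. }
    rewrite H. auto_derive; auto. ring.
  - auto_derive; auto. field; auto.
Qed.
Lemma geo_deriv2 d x u t l : is_derive (fun s => gd1 d x u s l) t (gd2 d x u t l).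
Proof. unfold gd1, gd2. auto_derive; auto. ring. Qed.

Lemma geo0 d x u : geo d x u 0 = x.
Proof. apply functional_extensionality; intros l. unfold geo. rewrite Rmult_0_r, cos_0, sin_0. unfold Rdiv. ring. Qed.
Lemma geo_zero d y t : geo d y vzero t = y.
Proof. apply functional_extensionality; intros l. unfold geo.
  assert (sqnorm d vzero = 0). { unfold sqnorm, dot, vzero. transitivity (sumR d (fun _ => 0)). apply sumR_ext; intros; ring. apply sumR_zero. }
  rewrite H, sqrt_0, Rmult_0_l, cos_0. unfold vzero. ring. Qed.

Lemma geo_facts d p x u : wf d p ->
  (forall t, is_derive (fun t => ev (geo d x u t) p) t (Df d p (geo d x u t) (gd1 d x u t))) /\
  (forall t, is_derive (fun t => Df d p (geo d x u t) (gd1 d x u t)) t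
     (Df d p (geo d x u t) (gd2 d x u t) + D2 d p (geo d x u t) (gd1 d x u t) (gd1 d x u t))).
Proof.
  intros Hw. split; intros t.
  - apply (chain d p (geo d x u) (gd1 d x u)); auto. intros; apply geo_deriv; auto.
  - apply (chain2 d p (geo d x u) (gd1 d x u) (gd2 d x u)); auto. intros; apply geo_deriv; auto. intros; apply geo_deriv2.
Qed.

Lemma gd1_0 d x u l : gd1 d x u 0 l = u l.
Proof. unfold gd1. rewrite Rmult_0_r, cos_0, sin_0. ring. Qed.
Lemma gd2_0 d x u l : gd2 d x u 0 l = - sqnorm d u * x l.
Proof. unfold gd2. rewrite Rmult_0_r, cos_0, sin_0. rewrite sqrt_sqrt by apply sqnorm_nonneg. ring. Qed.

Lemma dot_basis d x i : (i < d)%nat -> dot d x (basis i) = x i.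
Proof. intros; unfold dot. apply sumR_basis'; auto. Qed.

Lemma D2_lin1 d p x v w z s : D2 d p x (fun l => v l - s * w l) z = D2 d p x v z - s * D2 d p x w z.
Proof. unfold D2. rewrite <- sumR_scal, <- sumR_minus. apply sumR_ext; intros; ring. Qed.
Lemma D2_lin2 d p x v w z s : D2 d p x z (fun l => v l - s * w l) = D2 d p x z v - s * D2 d p x z w.
Proof. unfold D2. rewrite <- sumR_scal, <- sumR_minus. apply sumR_ext; intros.
  rewrite (sumR_ext _ _ (fun l' => v l' * ev x (dP l' (dP i p)) - s * (w l' * ev x (dP l' (dP i p))))) by (intros; ring).
  rewrite sumR_minus, sumR_scal. ring. Qed.
Lemma D2_basis_l d p x w : sumR d (fun i => x i * D2 d p x (basis i) w) = D2 d p x x w.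
Proof. unfold D2 at 2. apply sumR_ext; intros i Hi. f_equal. unfold D2. apply sumR_basis; auto. Qed.
Lemma D2_basis_r d p x w : sumR d (fun i => x i * D2 d p x w (basis i)) = D2 d p x w x.
Proof.
  unfold D2. transitivity (sumR d (fun i => sumR d (fun l => x i * (w l * ev x (dP i (dP l p)))))).
  - apply sumR_ext; intros i Hi. rewrite <- sumR_scal. apply sumR_ext; intros l Hl. f_equal. f_equal.
    apply sumR_basis; auto.
  - rewrite sumR_swap. apply sumR_ext; intros l Hl. rewrite <- sumR_scal. apply sumR_ext; intros; ring.
Qed.

Lemma Pe_eq d x i : (i < d)%nat -> forall l, proj d x (basis i) l = basis i l - x i * x l.
Proof. intros H l. unfold proj. rewrite dot_basis; auto. Qed.

Lemma sum_D2_proj d p x : sqnorm d x = 1 ->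
  sumR d (fun i => D2 d p x (proj d x (basis i)) (proj d x (basis i))) =
  sumR d (fun i => D2 d p x (basis i) (basis i)) - D2 d p x x x.
Proof.
  intros Hx. rewrite (sumR_ext _ _ (fun i => D2 d p x (basis i) (basis i) - x i * D2 d p x x (basis i)
       - x i * D2 d p x (basis i) x + (x i * x i) * D2 d p x x x)).
  - rewrite !sumR_plus, !sumR_minus, D2_basis_l, D2_basis_r, sumR_scalr.
    unfold sqnorm, dot in Hx. rewrite Hx. ring.
  - intros i Hi. rewrite (D2_ext d p x _ (fun l => basis i l - x i * x l) _ (fun l => basis i l - x i * x l))
      by (intros; apply Pe_eq; auto).
    rewrite D2_lin1, !D2_lin2. ring.
Qed.

Lemma Df_proj d p x i : (i < d)%nat -> Df d p x (proj d x (basis i)) = ev x (dP i p) - x i * Df d p x x.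
Proof.
  intros Hi. rewrite (Df_ext d p x _ (fun l => basis i l + (- x i) * x l)) by (intros; rewrite Pe_eq; auto; ring).
  rewrite Df_lin, Df_basis by auto. ring.
Qed.

Lemma sqnorm_proj d x i : (i < d)%nat -> sqnorm d x = 1 -> sqnorm d (proj d x (basis i)) = 1 - x i * x i.
Proof.
  intros Hi Hx. unfold sqnorm, dot in *.
  rewrite (sumR_ext _ _ (fun l => basis i l * basis i l - (2 * x i) * (basis i l * x l) + (x i * x i) * (x l * x l))).
  rewrite sumR_plus, sumR_minus, !sumR_scal, Hx, !sumR_basis by auto. unfold basis. rewrite Nat.eqb_refl. ring.
  intros l Hl. rewrite Pe_eq by auto. ring.
Qed.

Lemma sumR_sq_proj d x (G : nat -> R) D : sqnorm d x = 1 -> sumR d (fun i => x i * G i) = D ->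
  sumR d (fun i => (G i - x i * D) * (G i - x i * D)) = sumR d (fun i => G i * G i) - D * D.
Proof.
  intros Hx HD. unfold sqnorm, dot in Hx.
  rewrite (sumR_ext _ _ (fun i => G i * G i - (2 * D) * (x i * G i) + (D * D) * (x i * x i))) by (intros; ring).
  rewrite sumR_plus, sumR_minus, !sumR_scal, Hx, HD. ring.
Qed.

Section OneFun.
Variables (d k : nat) (f : vec -> R).
Hypothesis Hp : is_hom_poly d k f.
Hypothesis Hharm : is_harmonic d f.

Definition lam := INR k * (INR k + INR d - 2).

Lemma X1 x u : forall t, ex_derive (fun t => f (geo d x u t)) t /\ ex_derive (Derive (fun t => f (geo d x u t))) t.
Proof.
  destruct (hom_poly_rep d k f Hp) as [p [Hw [Hf Hh]]]. destruct (geo_facts d p x u Hw) as [G1 G2].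
  destruct (derive2_facts _ _ _ G1 G2) as [A1 [A2 [A3 A4]]].
  intros t. split.
  - destruct (A1 t) as [l Hl]. exists l. eapply isd_ext; [|apply Hl]. intros; simpl; auto.
  - destruct (A3 t) as [l Hl]. exists l. eapply isd_ext; [|apply Hl]. intros; simpl.
    apply Derive_ext. intros; auto.
Qed.

Lemma X2 x i : forall t, ex_derive (fun t => f (line x i t)) t /\ ex_derive (Derive (fun t => f (line x i t))) t.
Proof.
  destruct (hom_poly_rep d k f Hp) as [p [Hw [Hf Hh]]]. destruct (line_facts d p x i Hw) as [G1 G2].
  destruct (derive2_facts _ _ _ G1 G2) as [A1 [A2 [A3 A4]]].
  intros t. split.
  - destruct (A1 t) as [l Hl]. exists l. eapply isd_ext; [|apply Hl]. intros; simpl; auto.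
  - destruct (A3 t) as [l Hl]. exists l. eapply isd_ext; [|apply Hl]. intros; simpl.
    apply Derive_ext. intros; auto.
Qed.

Lemma harm_D2 p : wf d p -> (forall y, f y = ev y p) -> forall x, sumR d (fun i => D2 d p x (basis i) (basis i)) = 0.
Proof.
  intros Hw Hf x. rewrite <- (Hharm x). apply sumR_ext; intros i Hi.
  destruct (line_facts d p x i Hw) as [G1 G2].
  destruct (derive2_facts _ _ _ G1 G2) as [A1 [A2 [A3 A4]]].
  rewrite (Derive_n_ext _ (fun t => ev (line x i t) p)) by (intros; apply Hf).
  change (fun t => ev (fun l => if Nat.eqb l i then x l + t else x l) p) with (fun t => ev (line x i t) p).
  rewrite A4, line0. auto.
Qed.

Lemma X3 x : sqnorm d x = 1 ->
  sumR d (fun i => Derive_n (fun t => f (geo d x (proj d x (basis i)) t)) 2 0) = - lam * f x.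
Proof.
  intros Hx. destruct (hom_poly_rep d k f Hp) as [p [Hw [Hf Hh]]].
  rewrite (sumR_ext _ _ (fun i => - sqnorm d (proj d x (basis i)) * Df d p x x + D2 d p x (proj d x (basis i)) (proj d x (basis i)))).
  - rewrite sumR_plus, sum_D2_proj, (harm_D2 p), (euler2 d k p Hw Hh), sumR_scalr by auto.
    rewrite (sumR_ext _ _ (fun i => - 1 + x i * x i)).
    rewrite sumR_plus, sumR_const. unfold sqnorm, dot in Hx. rewrite Hx, (euler1 d k p Hw Hh). rewrite Hf. unfold lam. ring.
    intros i Hi. rewrite sqnorm_proj by auto. ring.
  - intros i Hi. set (u := proj d x (basis i)).
    destruct (geo_facts d p x u Hw) as [G1 G2].
    destruct (derive2_facts _ _ _ G1 G2) as [A1 [A2 [A3 A4]]].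
    rewrite (Derive_n_ext _ (fun t => ev (geo d x u t) p)) by (intros; apply Hf).
    rewrite A4, geo0. f_equal.
    + rewrite (Df_ext d p x _ (fun l => (- sqnorm d u) * x l)) by (intros; apply gd2_0). apply Df_scal.
    + apply D2_ext; intros; apply gd1_0.
Qed.

Lemma X4 x : sqnorm d x = 1 ->
  sumR d (fun i => Derive (fun t => f (geo d x (proj d x (basis i)) t)) 0 * Derive (fun t => f (geo d x (proj d x (basis i)) t)) 0)
  = sumR d (fun i => Derive (fun t => f (line x i t)) 0 * Derive (fun t => f (line x i t)) 0) - (INR k * f x) * (INR k * f x).
Proof.
  intros Hx. destruct (hom_poly_rep d k f Hp) as [p [Hw [Hf Hh]]].
  assert (Eg : forall i, (i < d)%nat -> Derive (fun t => f (geo d x (proj d x (basis i)) t)) 0 = ev x (dP i p) - x i * Df d p x x).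
  { intros i Hi. set (u := proj d x (basis i)).
    destruct (geo_facts d p x u Hw) as [G1 G2].
    destruct (derive2_facts _ _ _ G1 G2) as [A1 [A2 [A3 A4]]].
    rewrite (Derive_ext _ (fun t => ev (geo d x u t) p)) by (intros; apply Hf).
    rewrite A2, geo0. rewrite (Df_ext d p x _ u) by (intros; apply gd1_0). apply Df_proj; auto. }
  assert (El : forall i, (i < d)%nat -> Derive (fun t => f (line x i t)) 0 = ev x (dP i p)).
  { intros i Hi. destruct (line_facts d p x i Hw) as [G1 G2].
    destruct (derive2_facts _ _ _ G1 G2) as [A1 [A2 [A3 A4]]].
    rewrite (Derive_ext _ (fun t => ev (line x i t) p)) by (intros; apply Hf).
    rewrite A2, line0. apply Df_basis; auto. }
  rewrite (sumR_ext _ _ (fun i => (ev x (dP i p) - x i * Df d p x x) * (ev x (dP i p) - x i * Df d p x x)))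
    by (intros; rewrite Eg; auto).
  rewrite (sumR_ext d (fun i => Derive (fun t => f (line x i t)) 0 * Derive (fun t => f (line x i t)) 0) (fun i => ev x (dP i p) * ev x (dP i p)))
    by (intros; rewrite El; auto).
  rewrite (sumR_sq_proj d x (fun i => ev x (dP i p)) (Df d p x x)); auto.
  rewrite (euler1 d k p Hw Hh), Hf. ring.
Qed.
End OneFun.

Lemma dot_proj d x w : sqnorm d x = 1 -> dot d x (proj d x w) = 0.
Proof. intros Hx. unfold proj, dot in *. unfold sqnorm, dot in Hx.
  rewrite (sumR_ext _ _ (fun i => x i * w i - sumR d (fun i => x i * w i) * (x i * x i))) by (intros; ring).
  rewrite sumR_minus, sumR_scal, Hx. ring. Qed.

Lemma geo_sphere d x u t : sqnorm d x = 1 -> dot d x u = 0 -> sqnorm d (geo d x u t) = 1.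
Proof.
  intros Hx Hu. unfold geo. set (a := sqrt (sqnorm d u)).
  set (C := cos (a * t)). set (S := sin (a * t) / a).
  unfold sqnorm, dot in *.
  rewrite (sumR_ext _ _ (fun l => (C*C) * (x l * x l) + (2 * C * S) * (x l * u l) + (S * S) * (u l * u l))) by (intros; ring).
  rewrite !sumR_plus, !sumR_scal, Hx, Hu.
  assert (Ha : a * a = sumR d (fun i => u i * u i)). { unfold a. apply sqrt_sqrt. apply (sqnorm_nonneg d u). }
  destruct (Req_dec a 0) as [H0|H0].
  - unfold S, C. rewrite H0, Rmult_0_l, sin_0, cos_0. unfold Rdiv. ring.
  - rewrite <- Ha. assert (HS : S * a = sin (a * t)) by (unfold S; field; auto).
    replace (C * C * 1 + 2 * C * S * 0 + S * S * (a * a)) with (C * C + (S * a) * (S * a)) by ring.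
    rewrite HS. unfold C. rewrite <- (sin2_cos2 (a*t)). unfold Rsqr. ring.
Qed.

Lemma sum_sq_deriv N (L : nat -> R -> R) (t : R) :
  (forall j, (j < N)%nat -> ex_derive (L j) t) ->
  is_derive (fun t => sumR N (fun j => L j t * L j t)) t (sumR N (fun j => 2 * (L j t * Derive (L j) t))).
Proof.
  intros H. apply (isd_sumR N (fun j t => L j t * L j t) (fun j t => 2 * (L j t * Derive (L j) t))).
  intros j Hj. eapply isd_ext2; [|apply isd_mult; apply Derive_correct; apply H; auto]. ring.
Qed.
Lemma sum_prod_deriv N (L : nat -> R -> R) (t : R) :
  (forall j, (j < N)%nat -> ex_derive (L j) t) ->
  (forall j, (j < N)%nat -> ex_derive (Derive (L j)) t) ->
  is_derive (fun t => sumR N (fun j => L j t * Derive (L j) t)) t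
    (sumR N (fun j => Derive (L j) t * Derive (L j) t + L j t * Derive_n (L j) 2 t)).
Proof.
  intros H H'. apply (isd_sumR N (fun j t => L j t * Derive (L j) t) (fun j t => Derive (L j) t * Derive (L j) t + L j t * Derive_n (L j) 2 t)).
  intros j Hj. apply isd_mult; apply Derive_correct; auto.
Qed.

Lemma sqnorm_line d x i t : (i < d)%nat -> sqnorm d (line x i t) = sqnorm d x + 2 * t * x i + t * t.
Proof.
  intros Hi. unfold sqnorm, dot.
  rewrite (sumR_ext _ _ (fun l => x l * x l + (2 * t) * (basis i l * x l) + (t * t) * (basis i l * basis i l))).
  rewrite !sumR_plus, !sumR_scal, !sumR_basis by auto. unfold basis; rewrite Nat.eqb_refl. ring.
  intros l Hl. unfold line, basis. destruct (Nat.eqb l i); ring.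
Qed.

Lemma Dn2_poly r k b : Derive_n (fun t => r ^ 2 * (1 + 2 * t * b + t * t) ^ k) 2 0 = r ^ 2 * INR k * (2 + 4 * (INR k - 1) * (b * b)).
Proof.
  destruct (derive2_facts (fun t => r ^ 2 * (1 + 2 * t * b + t * t) ^ k)
    (fun t => r ^ 2 * (INR k * (2 * b + 2 * t) * (1 + 2 * t * b + t * t) ^ pred k))
    (fun t => r ^ 2 * INR k * (2 * (1 + 2 * t * b + t * t) ^ pred k + (2 * b + 2 * t) * (INR (pred k) * (2 * b + 2 * t) * (1 + 2 * t * b + t * t) ^ pred (pred k)))))
    as [_ [_ [_ A4]]].
  - intros t. auto_derive; auto. ring.
  - intros t. auto_derive; auto. ring.
  - rewrite A4. replace (1 + 2 * 0 * b + 0 * 0) with 1 by ring. rewrite !pow1.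
    replace (r ^ 2 * INR k * (2 * 1 + (2 * b + 2 * 0) * (INR (pred k) * (2 * b + 2 * 0) * 1)))
      with (r ^ 2 * (2 * INR k + 4 * (b * b) * (INR k * INR (pred k)))) by ring.
    rewrite INR_pred. ring.
Qed.

Section VecFun.
Variables (d N k : nat) (r : R) (F : vec -> vec).
Hypothesis HF : harmonic_form d N k F.
Hypothesis Hn : forall x, sqnorm N (F x) = r ^ 2 * (sqnorm d x) ^ k.

Lemma V0 x : sqnorm d x = 1 -> sqnorm N (F x) = r ^ 2.
Proof. intros H. rewrite Hn, H, pow1. ring. Qed.

Lemma Q1 x u t : sqnorm d x = 1 -> dot d x u = 0 ->
  sumR N (fun j => F (geo d x u t) j * Derive (fun s => F (geo d x u s) j) t) = 0.
Proof.
  intros Hx Hu.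
  assert (H := sum_sq_deriv N (fun j s => F (geo d x u s) j) t).
  assert (H' : is_derive (fun t => sumR N (fun j => F (geo d x u t) j * F (geo d x u t) j)) t 0).
  { eapply isd_ext; [|apply (isd_const (r ^ 2))]. intros s. simpl. symmetry.
    change (sqnorm N (F (geo d x u s)) = r ^ 2). apply V0. apply geo_sphere; auto. }
  assert (Hex : forall j, (j < N)%nat -> ex_derive (fun s => F (geo d x u s) j) t).
  { intros j Hj. destruct (HF j Hj) as [H1 H2]. exact (proj1 (X1 d k (fun y => F y j) H1 x u t)). }
  specialize (H Hex). cbv beta in H.
  apply is_derive_unique in H. apply is_derive_unique in H'. rewrite H' in H.
  rewrite sumR_scal in H. lra.
Qed.

Lemma Q2 x u : sqnorm d x = 1 -> dot d x u = 0 ->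
  sumR N (fun j => F x j * Derive_n (fun s => F (geo d x u s) j) 2 0) =
  - sumR N (fun j => Derive (fun s => F (geo d x u s) j) 0 * Derive (fun s => F (geo d x u s) j) 0).
Proof.
  intros Hx Hu.
  assert (H := sum_prod_deriv N (fun j s => F (geo d x u s) j) 0).
  assert (Hex : forall j, (j < N)%nat -> ex_derive (fun s => F (geo d x u s) j) 0 /\ ex_derive (Derive (fun s => F (geo d x u s) j)) 0).
  { intros j Hj. destruct (HF j Hj) as [H1 H2]. exact (X1 d k (fun y => F y j) H1 x u 0). }
  assert (H0 := H (fun j Hj => proj1 (Hex j Hj)) (fun j Hj => proj2 (Hex j Hj))). clear H. cbv beta in H0.
  assert (H' : is_derive (fun t => sumR N (fun j => F (geo d x u t) j * Derive (fun s => F (geo d x u s) j) t)) 0 0).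
  { eapply isd_ext; [|apply (isd_const 0)]. intros s. symmetry. apply Q1; auto. }
  apply is_derive_unique in H0. apply is_derive_unique in H'. rewrite H' in H0.
  rewrite geo0 in H0. rewrite sumR_plus in H0. lra.
Qed.

Lemma En x : sqnorm d x = 1 ->
  sumR d (fun i => sqnorm N (fun j => Derive (fun t => F (geo d x (proj d x (basis i)) t) j) 0)) = lam d k * r ^ 2.
Proof.
  intros Hx. unfold sqnorm at 1, dot. rewrite sumR_swap.
  rewrite (sumR_ext _ _ (fun j => sumR d (fun i => Derive (fun t => F (line x i t) j) 0 * Derive (fun t => F (line x i t) j) 0)
      - (INR k * F x j) * (INR k * F x j))).
  2:{ intros j Hj. destruct (HF j Hj) as [H1 H2]. pose proof (X4 d k (fun y => F y j) H1 x Hx) as H4. cbv beta in H4. exact H4. }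
  rewrite sumR_minus, sumR_swap.
  rewrite (sumR_ext N (fun j => INR k * F x j * (INR k * F x j)) (fun j => (INR k * INR k) * (F x j * F x j))) by (intros; ring).
  rewrite sumR_scal. change (sumR N (fun j => F x j * F x j)) with (sqnorm N (F x)). rewrite V0 by auto.
  assert (Hi : forall i, (i < d)%nat ->
     sumR N (fun j => Derive (fun t => F (line x i t) j) 0 * Derive (fun t => F (line x i t) j) 0) =
     r ^ 2 * INR k * (2 + 4 * (INR k - 1) * (x i * x i)) / 2
     - sumR N (fun j => F x j * Derive_n (fun t => F (line x i t) j) 2 0)).
  { intros i Hid.
    assert (Hex : forall j, (j < N)%nat -> forall t, ex_derive (fun s => F (line x i s) j) t /\ ex_derive (Derive (fun s => F (line x i s) j)) t).
    { intros j Hj t. destruct (HF j Hj) as [H1 H2]. exact (X2 d k (fun y => F y j) H1 x i t). }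
    assert (D1 : forall t, Derive (fun t => sumR N (fun j => F (line x i t) j * F (line x i t) j)) t
                 = 2 * sumR N (fun j => F (line x i t) j * Derive (fun s => F (line x i s) j) t)).
    { intros t. rewrite <- sumR_scal.
      pose proof (sum_sq_deriv N (fun j s => F (line x i s) j) t) as HH. cbv beta in HH.
      specialize (HH (fun j Hj => proj1 (Hex j Hj t))). exact (is_derive_unique _ _ _ HH). }
    assert (D2v : Derive_n (fun t => sumR N (fun j => F (line x i t) j * F (line x i t) j)) 2 0 =
       2 * sumR N (fun j => Derive (fun s => F (line x i s) j) 0 * Derive (fun s => F (line x i s) j) 0 +
                           F (line x i 0) j * Derive_n (fun s => F (line x i s) j) 2 0)).
    { transitivity (Derive (Derive (fun t => sumR N (fun j => F (line x i t) j * F (line x i t) j))) 0). reflexivity.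
      rewrite (Derive_ext _ _ 0 D1). rewrite Derive_scal. f_equal.
      pose proof (sum_prod_deriv N (fun j s => F (line x i s) j) 0) as HH. cbv beta in HH.
      specialize (HH (fun j Hj => proj1 (Hex j Hj 0)) (fun j Hj => proj2 (Hex j Hj 0))).
      exact (is_derive_unique _ _ _ HH). }
    assert (D3 : Derive_n (fun t => sumR N (fun j => F (line x i t) j * F (line x i t) j)) 2 0 =
       r ^ 2 * INR k * (2 + 4 * (INR k - 1) * (x i * x i))).
    { rewrite <- Dn2_poly. apply Derive_n_ext. intros t.
      change (sqnorm N (F (line x i t)) = r ^ 2 * (1 + 2 * t * x i + t * t) ^ k).
      rewrite Hn, sqnorm_line, Hx by auto. auto. }
    rewrite D2v in D3. rewrite line0, sumR_plus in D3. lra. }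
  rewrite (sumR_ext _ _ _ Hi). rewrite sumR_minus.
  rewrite (sumR_swap d N (fun i j => F x j * Derive_n (fun t => F (line x i t) j) 2 0)).
  rewrite (sumR_ext N _ (fun _ => 0)).
  2:{ intros j Hj. rewrite sumR_scal. destruct (HF j Hj) as [H1 H2]. pose proof (H2 x) as HH.
    change (sumR d (fun i => Derive_n (fun t => F (line x i t) j) 2 0) = 0) in HH. rewrite HH. ring. }
  rewrite sumR_zero.
  rewrite (sumR_ext d _ (fun i => r ^ 2 * INR k + (2 * r ^ 2 * INR k * (INR k - 1)) * (x i * x i))) by (intros; field).
  rewrite sumR_plus, sumR_scal, sumR_const, sumR_scal. unfold sqnorm, dot in Hx. rewrite Hx.
  unfold lam. ring.
Qed.
End VecFun.

Lemma pm_l n1 F1 F2 x y j : (j < S n1)%nat -> prod_map n1 F1 F2 x y j = F1 x j.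
Proof. intros H. unfold prod_map. destruct (Nat.ltb_spec j (S n1)); auto; lia. Qed.
Lemma pm_r n1 F1 F2 x y j : prod_map n1 F1 F2 x y (S n1 + j)%nat = F2 y j.
Proof. unfold prod_map. destruct (Nat.ltb_spec (S n1 + j)%nat (S n1)); [lia|]. f_equal. lia. Qed.

Lemma dot_split n1 n2 u v : dot (n1 + n2 + 2) u v =
  sumR (S n1) (fun j => u j * v j) + sumR (S n2) (fun j => u (S n1 + j)%nat * v (S n1 + j)%nat).
Proof. unfold dot. replace (n1 + n2 + 2)%nat with (S n1 + S n2)%nat by lia. apply sumR_split. Qed.

Lemma split_idx n1 n2 j : (j < n1 + n2 + 2)%nat -> (j < S n1)%nat \/ exists j', j = (S n1 + j')%nat /\ (j' < S n2)%nat.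
Proof. intros H. destruct (Nat.lt_ge_cases j (S n1)); [left; auto|right]. exists (j - S n1)%nat. split; lia. Qed.

Lemma geo_zero' d y : geo d y vzero = fun _ => y.
Proof. apply functional_extensionality; intros t. apply geo_zero. Qed.

Lemma Dn_const (a : R) : Derive_n (fun _ => a) 2 0 = 0.
Proof. apply Derive_n_const. Qed.

Section Main.
Variables (m1 m2 n1 n2 k1 k2 : nat) (r1 r2 : R) (F1 F2 : vec -> vec).
Hypothesis HF1 : harmonic_form (S m1) (S n1) k1 F1.
Hypothesis HF2 : harmonic_form (S m2) (S n2) k2 F2.
Hypothesis Hn1 : forall x, sqnorm (S n1) (F1 x) = r1 ^ 2 * (sqnorm (S m1) x) ^ k1.
Hypothesis Hn2 : forall y, sqnorm (S n2) (F2 y) = r2 ^ 2 * (sqnorm (S m2) y) ^ k2.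
Hypothesis Hr : r1 ^ 2 + r2 ^ 2 = 1.

Let d1 := S m1.
Let d2 := S m2.
Let dT := (n1 + n2 + 2)%nat.
Let Phi := prod_map n1 F1 F2.
Let l1 := lam d1 k1.
Let l2 := lam d2 k2.
Let c := l1 - l2.
Let a := - c * r2 ^ 2.
Let b := c * r1 ^ 2.
Definition Pe d x i := proj d x (basis i).

Definition tauc (x y : vec) : vec := fun j =>
  if Nat.ltb j (S n1) then (- (lam (S m1) k1 - lam (S m2) k2) * r2 ^ 2) * F1 x j
  else ((lam (S m1) k1 - lam (S m2) k2) * r1 ^ 2) * F2 y (j - S n1)%nat.

Lemma tauc_l x y j : (j < S n1)%nat -> tauc x y j = a * F1 x j.
Proof. intros H. unfold tauc. destruct (Nat.ltb_spec j (S n1)); auto; lia. Qed.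
Lemma tauc_r x y j : tauc x y (S n1 + j)%nat = b * F2 y j.
Proof. unfold tauc. destruct (Nat.ltb_spec (S n1 + j)%nat (S n1)); [lia|]. do 2 f_equal. lia. Qed.

Lemma TR_l x y j : sqnorm d1 x = 1 -> (j < S n1)%nat ->
  trM d1 d2 x y (fun u v j => Derive_n (fun t => Phi (geo d1 x u t) (geo d2 y v t) j) 2 0) j = - l1 * F1 x j.
Proof.
  intros Hx Hj. unfold trM. rewrite !geo_zero'.
  rewrite (sumR_ext d2 _ (fun _ => 0)).
  2:{ intros i Hi. rewrite (Derive_n_ext _ (fun _ => F1 x j)) by (intros; apply pm_l; auto). apply Dn_const. }
  rewrite sumR_zero, Rplus_0_r.
  rewrite (sumR_ext d1 _ (fun i => Derive_n (fun t => F1 (geo d1 x (proj d1 x (basis i)) t) j) 2 0)).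
  2:{ intros i Hi. apply Derive_n_ext. intros t. apply pm_l; auto. }
  destruct (HF1 j Hj) as [H1 H2]. apply (X3 d1 k1 (fun z => F1 z j) H1 H2 x Hx).
Qed.

Lemma TR_r x y j : sqnorm d2 y = 1 -> (j < S n2)%nat ->
  trM d1 d2 x y (fun u v j => Derive_n (fun t => Phi (geo d1 x u t) (geo d2 y v t) j) 2 0) (S n1 + j)%nat = - l2 * F2 y j.
Proof.
  intros Hy Hj. unfold trM. rewrite !geo_zero'.
  rewrite (sumR_ext d1 _ (fun _ => 0)).
  2:{ intros i Hi. rewrite (Derive_n_ext _ (fun _ => F2 y j)) by (intros; apply pm_r; auto). apply Dn_const. }
  rewrite sumR_zero, Rplus_0_l.
  rewrite (sumR_ext d2 _ (fun i => Derive_n (fun t => F2 (geo d2 y (proj d2 y (basis i)) t) j) 2 0)).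
  2:{ intros i Hi. apply Derive_n_ext. intros t. apply pm_r; auto. }
  destruct (HF2 j Hj) as [H1 H2]. apply (X3 d2 k2 (fun z => F2 z j) H1 H2 y Hy).
Qed.

Lemma tension_eq x y j : sqnorm d1 x = 1 -> sqnorm d2 y = 1 -> (j < dT)%nat ->
  tension dT d1 d2 Phi x y j = tauc x y j.
Proof.
  intros Hx Hy Hj. unfold tension, proj.
  set (M := trM d1 d2 x y (fun u v j => Derive_n (fun t => Phi (geo d1 x u t) (geo d2 y v t) j) 2 0)).
  assert (HD : dot dT (Phi x y) M = - l1 * r1 ^ 2 - l2 * r2 ^ 2).
  { unfold dT. rewrite dot_split.
    rewrite (sumR_ext (S n1) _ (fun j => - l1 * (F1 x j * F1 x j))).
    2:{ intros j' Hj'. unfold M. rewrite TR_l by auto. unfold Phi. rewrite pm_l by auto. ring. }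
    rewrite (sumR_ext (S n2) _ (fun j => - l2 * (F2 y j * F2 y j))).
    2:{ intros j' Hj'. unfold M. rewrite TR_r by auto. unfold Phi. rewrite pm_r by auto. ring. }
    rewrite !sumR_scal. change (sumR (S n1) (fun j => F1 x j * F1 x j)) with (sqnorm (S n1) (F1 x)).
    change (sumR (S n2) (fun j => F2 y j * F2 y j)) with (sqnorm (S n2) (F2 y)).
    rewrite (V0 d1 (S n1) k1 r1 F1 Hn1 x Hx), (V0 d2 (S n2) k2 r2 F2 Hn2 y Hy). ring. }
  rewrite HD. destruct (split_idx n1 n2 j Hj) as [Hl|[j' [-> Hj']]].
  - unfold M. rewrite TR_l, tauc_l by auto. unfold Phi. rewrite pm_l by auto.
    unfold a, c. replace (r1 ^ 2) with (1 - r2 ^ 2) by lra. ring.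
  - unfold M. rewrite TR_r, tauc_r by auto. unfold Phi. rewrite pm_r by auto.
    unfold b, c. replace (r2 ^ 2) with (1 - r1 ^ 2) by lra. ring.
Qed.

Lemma dot_ext n u u' v v' : (forall j, (j < n)%nat -> u j = u' j) -> (forall j, (j < n)%nat -> v j = v' j) ->
  dot n u v = dot n u' v'.
Proof. intros H1 H2. unfold dot. apply sumR_ext; intros. rewrite H1, H2; auto. Qed.

Definition S1 x u := sqnorm (S n1) (fun j => Derive (fun t => F1 (geo d1 x u t) j) 0).
Definition S2 y v := sqnorm (S n2) (fun j => Derive (fun t => F2 (geo d2 y v t) j) 0).

Lemma hess1 x y u : sqnorm d1 x = 1 -> sqnorm d2 y = 1 -> dot d1 x u = 0 ->
  (forall j, (j < S n1)%nat -> hess_sec dT d1 d2 Phi (tension dT d1 d2 Phi) x y u vzero j =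
     a * Derive_n (fun t => F1 (geo d1 x u t) j) 2 0 + a * S1 x u * F1 x j) /\
  (forall j, (j < S n2)%nat -> hess_sec dT d1 d2 Phi (tension dT d1 d2 Phi) x y u vzero (S n1 + j)%nat =
     a * S1 x u * F2 y j).
Proof.
  intros Hx Hy Hu.
  set (Y := fun t j => if Nat.ltb j (S n1) then a * Derive (fun s => F1 (geo d1 x u s) j) t else 0).
  assert (HS : forall s, sqnorm d1 (geo d1 x u s) = 1) by (intros; apply geo_sphere; auto).
  assert (KD : forall t j, (j < dT)%nat ->
     Derive (fun s => tension dT d1 d2 Phi (geo d1 x u s) y j) t = Y t j).
  { intros t j Hj. rewrite (Derive_ext _ (fun s => tauc (geo d1 x u s) y j))
      by (intros; apply tension_eq; auto).
    unfold Y, tauc. destruct (Nat.ltb j (S n1)).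
    - apply Derive_scal.
    - apply Derive_const. }
  assert (KW : forall t j, (j < dT)%nat ->
     proj dT (Phi (geo d1 x u t) y) (fun j => Derive (fun s => tension dT d1 d2 Phi (geo d1 x u s) y j) t) j = Y t j).
  { intros t j Hj. unfold proj. rewrite KD by auto.
    rewrite (dot_ext dT _ _ _ (Y t) (fun _ _ => eq_refl) (fun j Hj => KD t j Hj)).
    unfold dT. rewrite dot_split.
    rewrite (sumR_ext (S n1) _ (fun j => a * (F1 (geo d1 x u t) j * Derive (fun s => F1 (geo d1 x u s) j) t))).
    2:{ intros j' Hj'. unfold Y, Phi. rewrite pm_l by auto. destruct (Nat.ltb_spec j' (S n1)); [ring|lia]. }
    rewrite (sumR_ext (S n2) _ (fun j => 0)).
    2:{ intros j' Hj'. unfold Y. destruct (Nat.ltb_spec (S n1 + j') (S n1)); [lia|ring]. }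
    rewrite sumR_zero, sumR_scal, (Q1 d1 (S n1) k1 r1 F1 HF1 Hn1 x u t Hx Hu). ring. }
  set (Z := fun j => if Nat.ltb j (S n1) then a * Derive_n (fun t => F1 (geo d1 x u t) j) 2 0 else 0).
  assert (KZ : forall j, (j < dT)%nat ->
     Derive (fun t => proj dT (Phi (geo d1 x u t) y) (fun j => Derive (fun s => tension dT d1 d2 Phi (geo d1 x u s) y j) t) j) 0 = Z j).
  { intros j Hj. rewrite (Derive_ext _ (fun t => Y t j)) by (intros; apply KW; auto).
    unfold Y, Z. destruct (Nat.ltb j (S n1)).
    - rewrite Derive_scal. reflexivity.
    - apply Derive_const. }
  assert (KH : forall j, (j < dT)%nat -> hess_sec dT d1 d2 Phi (tension dT d1 d2 Phi) x y u vzero j =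
     Z j + a * S1 x u * Phi x y j).
  { intros j Hj. unfold hess_sec. rewrite !geo_zero'. cbv beta zeta. unfold proj at 1.
    rewrite KZ by auto.
    rewrite (dot_ext dT _ _ _ Z (fun _ _ => eq_refl) KZ).
    unfold dT. rewrite dot_split.
    rewrite (sumR_ext (S n1) _ (fun j => a * (F1 x j * Derive_n (fun t => F1 (geo d1 x u t) j) 2 0))).
    2:{ intros j' Hj'. unfold Z, Phi. rewrite pm_l by auto. destruct (Nat.ltb_spec j' (S n1)); [ring|lia]. }
    rewrite (sumR_ext (S n2) _ (fun j => 0)).
    2:{ intros j' Hj'. unfold Z. destruct (Nat.ltb_spec (S n1 + j') (S n1)); [lia|ring]. }
    rewrite sumR_zero, sumR_scal, (Q2 d1 (S n1) k1 r1 F1 HF1 Hn1 x u Hx Hu). unfold S1, sqnorm, dot. ring. }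
  split.
  - intros j Hj. rewrite KH by (unfold dT; lia). unfold Z, Phi. rewrite pm_l by auto.
    destruct (Nat.ltb_spec j (S n1)); [ring|lia].
  - intros j Hj. rewrite KH by (unfold dT; lia). unfold Z, Phi. rewrite pm_r.
    destruct (Nat.ltb_spec (S n1 + j) (S n1)); [lia|ring].
Qed.

Lemma hess2 x y v : sqnorm d1 x = 1 -> sqnorm d2 y = 1 -> dot d2 y v = 0 ->
  (forall j, (j < S n1)%nat -> hess_sec dT d1 d2 Phi (tension dT d1 d2 Phi) x y vzero v j =
     b * S2 y v * F1 x j) /\
  (forall j, (j < S n2)%nat -> hess_sec dT d1 d2 Phi (tension dT d1 d2 Phi) x y vzero v (S n1 + j)%nat =
     b * Derive_n (fun t => F2 (geo d2 y v t) j) 2 0 + b * S2 y v * F2 y j).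
Proof.
  intros Hx Hy Hv.
  set (Y := fun t j => if Nat.ltb j (S n1) then 0 else b * Derive (fun s => F2 (geo d2 y v s) (j - S n1)%nat) t).
  assert (HS : forall s, sqnorm d2 (geo d2 y v s) = 1) by (intros; apply geo_sphere; auto).
  assert (KD : forall t j, (j < dT)%nat ->
     Derive (fun s => tension dT d1 d2 Phi x (geo d2 y v s) j) t = Y t j).
  { intros t j Hj. rewrite (Derive_ext _ (fun s => tauc x (geo d2 y v s) j))
      by (intros; apply tension_eq; auto).
    unfold Y, tauc. destruct (Nat.ltb j (S n1)).
    - apply Derive_const.
    - apply Derive_scal. }
  assert (KW : forall t j, (j < dT)%nat ->
     proj dT (Phi x (geo d2 y v t)) (fun j => Derive (fun s => tension dT d1 d2 Phi x (geo d2 y v s) j) t) j = Y t j).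
  { intros t j Hj. unfold proj. rewrite KD by auto.
    rewrite (dot_ext dT _ _ _ (Y t) (fun _ _ => eq_refl) (fun j Hj => KD t j Hj)).
    unfold dT. rewrite dot_split.
    rewrite (sumR_ext (S n2) _ (fun j => b * (F2 (geo d2 y v t) j * Derive (fun s => F2 (geo d2 y v s) j) t))).
    2:{ intros j' Hj'. unfold Y, Phi. rewrite pm_r. destruct (Nat.ltb_spec (S n1 + j') (S n1)); [lia|].
        replace (S n1 + j' - S n1)%nat with j' by lia. ring. }
    rewrite (sumR_ext (S n1) _ (fun j => 0)).
    2:{ intros j' Hj'. unfold Y. destruct (Nat.ltb_spec j' (S n1)); [ring|lia]. }
    rewrite sumR_zero, sumR_scal, (Q1 d2 (S n2) k2 r2 F2 HF2 Hn2 y v t Hy Hv). ring. }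
  set (Z := fun j => if Nat.ltb j (S n1) then 0 else b * Derive_n (fun t => F2 (geo d2 y v t) (j - S n1)%nat) 2 0).
  assert (KZ : forall j, (j < dT)%nat ->
     Derive (fun t => proj dT (Phi x (geo d2 y v t)) (fun j => Derive (fun s => tension dT d1 d2 Phi x (geo d2 y v s) j) t) j) 0 = Z j).
  { intros j Hj. rewrite (Derive_ext _ (fun t => Y t j)) by (intros; apply KW; auto).
    unfold Y, Z. destruct (Nat.ltb j (S n1)).
    - apply Derive_const.
    - rewrite Derive_scal. reflexivity. }
  assert (KH : forall j, (j < dT)%nat -> hess_sec dT d1 d2 Phi (tension dT d1 d2 Phi) x y vzero v j =
     Z j + b * S2 y v * Phi x y j).
  { intros j Hj. unfold hess_sec. rewrite !geo_zero'. cbv beta zeta. unfold proj at 1.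
    rewrite KZ by auto.
    rewrite (dot_ext dT _ _ _ Z (fun _ _ => eq_refl) KZ).
    unfold dT. rewrite dot_split.
    rewrite (sumR_ext (S n2) _ (fun j => b * (F2 y j * Derive_n (fun t => F2 (geo d2 y v t) j) 2 0))).
    2:{ intros j' Hj'. unfold Z, Phi. rewrite pm_r. destruct (Nat.ltb_spec (S n1 + j') (S n1)); [lia|].
        replace (S n1 + j' - S n1)%nat with j' by lia. ring. }
    rewrite (sumR_ext (S n1) _ (fun j => 0)).
    2:{ intros j' Hj'. unfold Z. destruct (Nat.ltb_spec j' (S n1)); [ring|lia]. }
    rewrite sumR_zero, sumR_scal, (Q2 d2 (S n2) k2 r2 F2 HF2 Hn2 y v Hy Hv). unfold S2, sqnorm, dot. ring. }
  split.
  - intros j Hj. rewrite KH by (unfold dT; lia). unfold Z, Phi. rewrite pm_l by auto.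
    destruct (Nat.ltb_spec j (S n1)); [ring|lia].
  - intros j Hj. rewrite KH by (unfold dT; lia). unfold Z, Phi. rewrite pm_r.
    destruct (Nat.ltb_spec (S n1 + j) (S n1)); [lia|]. replace (S n1 + j - S n1)%nat with j by lia. ring.
Qed.

Lemma Pe_dot d x i : sqnorm d x = 1 -> dot d x (proj d x (basis i)) = 0.
Proof. intros; apply dot_proj; auto. Qed.

Lemma curv_eq x y j : sqnorm d1 x = 1 -> sqnorm d2 y = 1 -> (j < dT)%nat ->
  curv_trace dT d1 d2 Phi x y j = - (l1 * r1 ^ 2 + l2 * r2 ^ 2) * tauc x y j.
Proof.
  intros Hx Hy Hj. unfold curv_trace, trM. cbv zeta. rewrite (tension_eq x y j Hx Hy Hj).
  rewrite (sumR_ext d1 _ (fun i => (- tauc x y j) * S1 x (proj d1 x (basis i)))).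
  2:{ intros i Hi. set (u := proj d1 x (basis i)).
      assert (Hu : dot d1 x u = 0) by (apply Pe_dot; auto).
      assert (Hw : forall j, (j < dT)%nat -> dmap d1 d2 Phi x y u vzero j =
         if Nat.ltb j (S n1) then Derive (fun t => F1 (geo d1 x u t) j) 0 else 0).
      { intros j' Hj'. unfold dmap. rewrite geo_zero'. cbv beta.
        destruct (split_idx n1 n2 j' Hj') as [Hl|[j'' [-> Hj'']]].
        - destruct (Nat.ltb_spec j' (S n1)); [|lia]. apply Derive_ext; intros; unfold Phi; apply pm_l; auto.
        - destruct (Nat.ltb_spec (S n1 + j'') (S n1)); [lia|].
          rewrite (Derive_ext _ (fun _ => F2 y j'')) by (intros; unfold Phi; apply pm_r). apply Derive_const. }
      assert (Hd : dot dT (tension dT d1 d2 Phi x y) (dmap d1 d2 Phi x y u vzero) = 0).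
      { rewrite (dot_ext dT _ (tauc x y) _ _ (fun j Hj => tension_eq x y j Hx Hy Hj) Hw).
        unfold dT; rewrite dot_split.
        rewrite (sumR_ext (S n1) _ (fun j => a * (F1 (geo d1 x u 0) j * Derive (fun t => F1 (geo d1 x u t) j) 0))).
        2:{ intros j' Hj'. rewrite tauc_l, geo0 by auto. destruct (Nat.ltb_spec j' (S n1)); [ring|lia]. }
        rewrite (sumR_ext (S n2) _ (fun j => 0)).
        2:{ intros j' Hj'. destruct (Nat.ltb_spec (S n1 + j') (S n1)); [lia|ring]. }
        rewrite sumR_zero, sumR_scal, (Q1 d1 (S n1) k1 r1 F1 HF1 Hn1 x u 0 Hx Hu). ring. }
      assert (Hs : sqnorm dT (dmap d1 d2 Phi x y u vzero) = S1 x u).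
      { unfold sqnorm. rewrite (dot_ext dT _ _ _ _ Hw Hw). unfold dT; rewrite dot_split.
        rewrite (sumR_ext (S n2) _ (fun j => 0)).
        2:{ intros j' Hj'. destruct (Nat.ltb_spec (S n1 + j') (S n1)); [lia|ring]. }
        rewrite sumR_zero, Rplus_0_r. unfold S1, sqnorm, dot. apply sumR_ext; intros j' Hj'.
        destruct (Nat.ltb_spec j' (S n1)); [auto|lia]. }
      rewrite Hd, Hs. ring. }
  rewrite (sumR_ext d2 _ (fun i => (- tauc x y j) * S2 y (proj d2 y (basis i)))).
  2:{ intros i Hi. set (v := proj d2 y (basis i)).
      assert (Hv : dot d2 y v = 0) by (apply Pe_dot; auto).
      assert (Hw : forall j, (j < dT)%nat -> dmap d1 d2 Phi x y vzero v j =
         if Nat.ltb j (S n1) then 0 else Derive (fun t => F2 (geo d2 y v t) (j - S n1)%nat) 0).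
      { intros j' Hj'. unfold dmap. rewrite geo_zero'. cbv beta.
        destruct (split_idx n1 n2 j' Hj') as [Hl|[j'' [-> Hj'']]].
        - destruct (Nat.ltb_spec j' (S n1)); [|lia].
          rewrite (Derive_ext _ (fun _ => F1 x j')) by (intros; unfold Phi; apply pm_l; auto). apply Derive_const.
        - destruct (Nat.ltb_spec (S n1 + j'') (S n1)); [lia|].
          replace (S n1 + j'' - S n1)%nat with j'' by lia.
          apply Derive_ext; intros; unfold Phi; apply pm_r. }
      assert (Hd : dot dT (tension dT d1 d2 Phi x y) (dmap d1 d2 Phi x y vzero v) = 0).
      { rewrite (dot_ext dT _ (tauc x y) _ _ (fun j Hj => tension_eq x y j Hx Hy Hj) Hw).
        unfold dT; rewrite dot_split.
        rewrite (sumR_ext (S n2) _ (fun j => b * (F2 (geo d2 y v 0) j * Derive (fun t => F2 (geo d2 y v t) j) 0))).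
        2:{ intros j' Hj'. rewrite tauc_r, geo0. destruct (Nat.ltb_spec (S n1 + j') (S n1)); [lia|].
            replace (S n1 + j' - S n1)%nat with j' by lia. ring. }
        rewrite (sumR_ext (S n1) _ (fun j => 0)).
        2:{ intros j' Hj'. destruct (Nat.ltb_spec j' (S n1)); [ring|lia]. }
        rewrite sumR_zero, sumR_scal, (Q1 d2 (S n2) k2 r2 F2 HF2 Hn2 y v 0 Hy Hv). ring. }
      assert (Hs : sqnorm dT (dmap d1 d2 Phi x y vzero v) = S2 y v).
      { unfold sqnorm. rewrite (dot_ext dT _ _ _ _ Hw Hw). unfold dT; rewrite dot_split.
        rewrite (sumR_ext (S n1) _ (fun j => 0)).
        2:{ intros j' Hj'. destruct (Nat.ltb_spec j' (S n1)); [ring|lia]. }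
        rewrite sumR_zero, Rplus_0_l. unfold S2, sqnorm, dot. apply sumR_ext; intros j' Hj'.
        destruct (Nat.ltb_spec (S n1 + j') (S n1)); [lia|]. replace (S n1 + j' - S n1)%nat with j' by lia. auto. }
      rewrite Hd, Hs. ring. }
  rewrite !sumR_scal.
  unfold S1, S2. rewrite (En d1 (S n1) k1 r1 F1 HF1 Hn1 x Hx), (En d2 (S n2) k2 r2 F2 HF2 Hn2 y Hy).
  unfold l1, l2. ring.
Qed.

Lemma bit_l x y j : sqnorm d1 x = 1 -> sqnorm d2 y = 1 -> (j < S n1)%nat ->
  bitension dT d1 d2 Phi x y j = c ^ 2 * r2 ^ 2 * (r2 ^ 2 - r1 ^ 2) * F1 x j.
Proof.
  intros Hx Hy Hj. unfold bitension, rough_lap. rewrite curv_eq by (auto; unfold dT; lia).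
  rewrite tauc_l by auto. unfold trM.
  rewrite (sumR_ext d1 _ (fun i => a * Derive_n (fun t => F1 (geo d1 x (proj d1 x (basis i)) t) j) 2 0
                                  + (a * F1 x j) * S1 x (proj d1 x (basis i)))).
  2:{ intros i Hi. rewrite (proj1 (hess1 x y _ Hx Hy (Pe_dot d1 x i Hx)) j Hj). ring. }
  rewrite (sumR_ext d2 _ (fun i => (b * F1 x j) * S2 y (proj d2 y (basis i)))).
  2:{ intros i Hi. rewrite (proj1 (hess2 x y _ Hx Hy (Pe_dot d2 y i Hy)) j Hj). ring. }
  rewrite sumR_plus, !sumR_scal.
  destruct (HF1 j Hj) as [H1 H2]. pose proof (X3 d1 k1 (fun z => F1 z j) H1 H2 x Hx) as H3. cbv beta in H3.
  rewrite H3. unfold S1, S2.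
  rewrite (En d1 (S n1) k1 r1 F1 HF1 Hn1 x Hx), (En d2 (S n2) k2 r2 F2 HF2 Hn2 y Hy).
  fold l1 l2. unfold a, b, c. replace (r1 ^ 2) with (1 - r2 ^ 2) by lra. ring.
Qed.

Lemma bit_r x y j : sqnorm d1 x = 1 -> sqnorm d2 y = 1 -> (j < S n2)%nat ->
  bitension dT d1 d2 Phi x y (S n1 + j)%nat = c ^ 2 * r1 ^ 2 * (r1 ^ 2 - r2 ^ 2) * F2 y j.
Proof.
  intros Hx Hy Hj. unfold bitension, rough_lap. rewrite curv_eq by (auto; unfold dT; lia).
  rewrite tauc_r. unfold trM.
  rewrite (sumR_ext d1 _ (fun i => (a * F2 y j) * S1 x (proj d1 x (basis i)))).
  2:{ intros i Hi. rewrite (proj2 (hess1 x y _ Hx Hy (Pe_dot d1 x i Hx)) j Hj). ring. }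
  rewrite (sumR_ext d2 _ (fun i => b * Derive_n (fun t => F2 (geo d2 y (proj d2 y (basis i)) t) j) 2 0
                                  + (b * F2 y j) * S2 y (proj d2 y (basis i)))).
  2:{ intros i Hi. rewrite (proj2 (hess2 x y _ Hx Hy (Pe_dot d2 y i Hy)) j Hj). ring. }
  rewrite sumR_plus, !sumR_scal.
  destruct (HF2 j Hj) as [H1 H2]. pose proof (X3 d2 k2 (fun z => F2 z j) H1 H2 y Hy) as H3. cbv beta in H3.
  rewrite H3. unfold S1, S2.
  rewrite (En d1 (S n1) k1 r1 F1 HF1 Hn1 x Hx), (En d2 (S n2) k2 r2 F2 HF2 Hn2 y Hy).
  fold l1 l2. unfold a, b, c. replace (r2 ^ 2) with (1 - r1 ^ 2) by lra. ring.
Qed.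
End Main.

Lemma sph_basis d : (0 < d)%nat -> sqnorm d (basis 0) = 1.
Proof. intros H. unfold sqnorm, dot. rewrite sumR_basis by auto. unfold basis. simpl. ring. Qed.

Lemma nonzero_comp N v : sqnorm N v <> 0 -> exists j, (j < N)%nat /\ v j <> 0.
Proof.
  intros H. destruct (Classical_Prop.classic (exists j, (j < N)%nat /\ v j <> 0)) as [E|E]; auto.
  exfalso. apply H. unfold sqnorm, dot. transitivity (sumR N (fun _ => 0)); [|apply sumR_zero].
  apply sumR_ext; intros j Hj. destruct (Req_dec (v j) 0) as [->|Hv]; [ring|]. exfalso; apply E; eauto.
Qed.

Lemma energy_val d N k r F x : harmonic_form d N k F ->
  (forall x, sqnorm N (F x) = r ^ 2 * sqnorm d x ^ k) -> sqnorm d x = 1 ->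
  energy_density d N F x = / 2 * (lam d k * r ^ 2).
Proof. intros H1 H2 H3. unfold energy_density. rewrite (En d N k r F H1 H2 x H3). auto. Qed.

Lemma inv_sqrt2 r : 0 < r -> r ^ 2 = / 2 -> r = / sqrt 2.
Proof.
  intros Hr H. assert (Hs : 0 < sqrt 2) by (apply sqrt_lt_R0; lra).
  assert (Hs2 : sqrt 2 * sqrt 2 = 2) by (apply sqrt_sqrt; lra).
  assert (E : r * sqrt 2 = 1).
  { assert ((r * sqrt 2) * (r * sqrt 2) = 1). { replace ((r * sqrt 2) * (r * sqrt 2)) with (r ^ 2 * (sqrt 2 * sqrt 2)) by ring.
      rewrite H, Hs2. field. }
    assert (0 < r * sqrt 2) by nra. nra. }
  apply (Rmult_eq_reg_r (sqrt 2)); [|lra]. rewrite E. field. lra.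
Qed.

Theorem mainTheorem12 (m1 m2 n1 n2 k1 k2 : nat) (r1 r2 : R)
  (F1 F2 : vec -> vec) :
  (1 <= m1)%nat -> (1 <= m2)%nat ->
  0 < r1 -> 0 < r2 -> r1 ^ 2 + r2 ^ 2 = 1 ->
  harmonic_form (S m1) (S n1) k1 F1 ->
  harmonic_form (S m2) (S n2) k2 F2 ->
  (forall x, sqnorm (S n1) (F1 x) = r1 ^ 2 * (sqnorm (S m1) x) ^ k1) ->
  (forall y, sqnorm (S n2) (F2 y) = r2 ^ 2 * (sqnorm (S m2) y) ^ k2) ->
  (proper_biharmonic (n1 + n2 + 2) (S m1) (S m2) (prod_map n1 F1 F2) <->
   (r1 = / sqrt 2 /\ r2 = / sqrt 2 /\
    exists x y, on_sphere (S m1) x /\ on_sphere (S m2) y /\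
      energy_density (S m1) (S n1) F1 x <> energy_density (S m2) (S n2) F2 y)).
Proof.
  intros Hm1 Hm2 Hr1 Hr2 Hr HF1 HF2 Hn1 Hn2.
  set (x0 := basis 0). set (y0 := basis 0).
  assert (Hx0 : sqnorm (S m1) x0 = 1) by (apply sph_basis; lia).
  assert (Hy0 : sqnorm (S m2) y0 = 1) by (apply sph_basis; lia).
  destruct (nonzero_comp (S n1) (F1 x0)) as [j1 [Hj1 Hf1]].
  { rewrite (V0 (S m1) (S n1) k1 r1 F1 Hn1 x0 Hx0). nra. }
  set (c := lam (S m1) k1 - lam (S m2) k2).
  unfold proper_biharmonic, on_sphere. split.
  - intros [Hbi [x [y [Hx [Hy [j [Hj Ht]]]]]]].
    assert (Hc : c <> 0).
    { intros Hc. apply Ht. rewrite (tension_eq m1 m2 n1 n2 k1 k2 r1 r2 F1 F2 HF1 HF2 Hn1 Hn2 Hr x y j Hx Hy Hj).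
      unfold tauc. fold c. rewrite Hc. destruct (Nat.ltb j (S n1)); ring. }
    assert (Hb := Hbi x0 y0 Hx0 Hy0 j1 ltac:(lia)).
    rewrite (bit_l m1 m2 n1 n2 k1 k2 r1 r2 F1 F2 HF1 HF2 Hn1 Hn2 Hr x0 y0 j1 Hx0 Hy0 Hj1) in Hb.
    fold c in Hb.
    assert (Heq : r2 ^ 2 - r1 ^ 2 = 0).
    { apply Rmult_integral in Hb. destruct Hb as [Hb|Hb]; [|contradiction].
      apply Rmult_integral in Hb. destruct Hb as [Hb|Hb]; auto.
      apply Rmult_integral in Hb. destruct Hb as [Hb|Hb].
      - exfalso. apply (pow_nonzero c 2 Hc). auto.
      - exfalso. assert (0 < r2 ^ 2) by (apply pow_lt; auto). lra. }
    assert (E1 : r1 = / sqrt 2) by (apply inv_sqrt2; auto; lra).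
    assert (E2 : r2 = / sqrt 2) by (apply inv_sqrt2; auto; lra).
    split; auto. split; auto. exists x0, y0. split; auto. split; auto.
    rewrite (energy_val _ _ _ _ _ _ HF1 Hn1 Hx0), (energy_val _ _ _ _ _ _ HF2 Hn2 Hy0).
    rewrite E1, E2. intros H. apply Hc. unfold c.
    assert (0 < (/ sqrt 2) ^ 2). { apply pow_lt. apply Rinv_0_lt_compat. apply sqrt_lt_R0; lra. }
    nra.
  - intros [E1 [E2 [x [y [Hx [Hy He]]]]]].
    rewrite (energy_val _ _ _ _ _ _ HF1 Hn1 Hx), (energy_val _ _ _ _ _ _ HF2 Hn2 Hy) in He.
    assert (Hc : c <> 0). { intros Hc. apply He. unfold c in Hc. rewrite E1, E2. replace (lam (S m1) k1) with (lam (S m2) k2) by lra. auto. }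
    split.
    + intros x1 y1 Hx1 Hy1 j Hj.
      destruct (split_idx n1 n2 j Hj) as [Hl|[j' [-> Hj']]].
      * rewrite (bit_l m1 m2 n1 n2 k1 k2 r1 r2 F1 F2 HF1 HF2 Hn1 Hn2 Hr x1 y1 j Hx1 Hy1 Hl). rewrite E1, E2. ring.
      * rewrite (bit_r m1 m2 n1 n2 k1 k2 r1 r2 F1 F2 HF1 HF2 Hn1 Hn2 Hr x1 y1 j' Hx1 Hy1 Hj'). rewrite E1, E2. ring.
    + exists x0, y0. split; auto. split; auto. exists j1. split; [lia|].
      rewrite (tension_eq m1 m2 n1 n2 k1 k2 r1 r2 F1 F2 HF1 HF2 Hn1 Hn2 Hr x0 y0 j1 Hx0 Hy0 ltac:(lia)).
      rewrite tauc_l by auto. fold c.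
      assert (0 < r2 ^ 2) by (apply pow_lt; auto).
      intros Hz. apply Rmult_integral in Hz. destruct Hz as [Hz|Hz]; [|contradiction].
      apply Rmult_integral in Hz. destruct Hz as [Hz|Hz]; [|lra]. apply Hc; lra.
Qed.
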